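(* There is no axis rule $f$ (defined for profiles over every finite candidate set) that is a scoring rule, neutral, consistent with linearity, resistant to cloning, and satisfies clone-proximity.
   Context: Candidates come from a fixed infinite universe; rules are defined for profiles over every finite candidate set $C$. An approval ballot is a nonempty subset $A\subseteq C$; a profile over $C$ is a finite sequence of ballots. An axis is a strict linear order $\triangleleft$ on $C$, $\overleftarrow{\triangleleft}$ its reverse; a ballot $A$ is an interval of $\triangleleft$ if for all $a,b\in A$ and every $c$ with $a\triangleleft c\triangleleft b$ we have $c\in A$. A profile is linear if some axis makes all its ballots intervals; $\mathrm{con}(P)$ is the set of such axes. An axis rule maps each profile $P$ over $C$ to a nonempty set $f(P)$ of axes on $C$ closed under reversal. $f$ is a scoring rule if for every finite $C$ there is a cost function $\mathrm{cost}_C:(2^C\setminus\{\emptyset\})\times\{\text{axes on }C\}\to\mathbb R_{\ge0}$ with $f(P)=\arg\min_{\triangleleft}\sum_{A\in P}\mathrm{cost}_C(A,\triangleleft)$ for every profile $P$ over $C$. $f$ is neutral if for every bijection $\pi:C\to C'$, $f(\pi(P))=\pi(f(P))$ (renaming candidates in ballots and axes). $f$ is consistent with linearity if $f(P)=\mathrm{con}(P)$ for every linear profile. Two candidates $a,a'$ are clones in $P$ if for every $A\in P$, $a\in A$ iff $a'\in A$. $f$ satisfies clone-proximity if for every profile $P$ with clones $a,a'$, every $\triangleleft\in f(P)$, every $x$ with $a\triangleleft x\triangleleft a'$ or $a'\triangleleft x\triangleleft a$, and every $A\in P$ with $a,a'\in A$, we have $x\in A$. For $c\in C$, $P_{-c}$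 is the profile over $C\setminus\{c\}$ obtained by removing $c$ from every ballot (ballots becoming empty are discarded), and $\triangleleft_{-c}$ is the restriction of $\triangleleft$ to $C\setminus\{c\}$. $f$ is resistant to cloning if for every profile $P$ with clones $a,a'$: (1) for every $\triangleleft\in f(P)$, $\triangleleft_{-a}\in f(P_{-a})$; and (2) for every $\triangleleft^*\in f(P_{-a})$ there is $\triangleleft\in f(P)$ with $\triangleleft_{-a}=\triangleleft^*$. *)

(* Defs.v *)
From HB Require Import structures.
From mathcomp Require Import all_boot all_order all_algebra finmap.
From mathcomp Require Import reals.
Set Implicit Arguments. Unset Strict Implicit. Unset Printing Implicit Defensive.
Import Order.TTheory GRing.Theory Num.Theory.
Local Open Scope fset_scope.

Section Defs.
Variable U : choiceType.

Definition infinite_universe : Prop := forall X : {fset U}, exists x : U, x \notin X.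

(* An axis on C: a duplicate-free enumeration of C; a ◁ b iff a occurs before b. *)
Definition is_axis (C : {fset U}) (s : seq U) : Prop :=
  uniq s /\ forall x, (x \in s) = (x \in C).

Definition is_ballot (C A : {fset U}) : Prop := A != fset0 /\ A `<=` C.
Definition profile_over (C : {fset U}) (P : seq {fset U}) : Prop :=
  forall A, A \in P -> is_ballot C A.

Definition is_interval (s : seq U) (A : {fset U}) : Prop :=
  forall a b c, a \in A -> b \in A -> c \in s ->
    (index a s < index c s)%N -> (index c s < index b s)%N -> c \in A.

Definition con (C : {fset U}) (P : seq {fset U}) (s : seq U) : Prop :=
  is_axis C s /\ forall A, A \in P -> is_interval s A.
Definition linear_profile (C : {fset U}) (P : seq {fset U}) : Prop :=
  exists s, con C P s.

Definition rule_type := {fset U} -> seq {fset U} -> seq U -> Prop.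

Definition axis_rule (f : rule_type) : Prop :=
  forall C P, profile_over C P ->
    (exists s, f C P s) /\
    (forall s, f C P s -> is_axis C s) /\
    (forall s, f C P s -> f C P (rev s)).

Definition scoring_rule (R : realType) (f : rule_type) : Prop :=
  forall C : {fset U}, exists cost : {fset U} -> seq U -> R,
    (forall A s, is_ballot C A -> is_axis C s -> (0 <= cost A s)%R) /\
    (forall P, profile_over C P -> forall s,
       f C P s <-> (is_axis C s /\
         forall t, is_axis C t ->
           (\sum_(A <- P) cost A s <= \sum_(A <- P) cost A t)%R)).

(* Renaming along a bijection pi : C -> C' (given as a map U -> U injective on C
   with image C'). *)
Definition rename_profile (pi : U -> U) (P : seq {fset U}) : seq {fset U} :=
  map (fun A => pi @` A) P.

Definition neutral (f : rule_type) : Prop :=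
  forall (C C' : {fset U}) (pi : U -> U),
    {in C &, injective pi} -> pi @` C = C' ->
    forall P, profile_over C P ->
      forall s', f C' (rename_profile pi P) s' <-> exists2 s, f C P s & s' = map pi s.

Definition consistent_with_linearity (f : rule_type) : Prop :=
  forall C P, profile_over C P -> linear_profile C P ->
    forall s, f C P s <-> con C P s.

Definition clones (C : {fset U}) (P : seq {fset U}) (a a' : U) : Prop :=
  [/\ a \in C, a' \in C, a != a' &
      forall A, A \in P -> (a \in A) = (a' \in A)].

Definition clone_proximity (f : rule_type) : Prop :=
  forall C P a a', profile_over C P -> clones C P a a' ->
    forall s, f C P s ->
      forall x A, x \in s ->
        ((index a s < index x s < index a' s)%N \/
         (index a' s < index x s < index a s)%N) ->
        A \in P -> a \in A -> a' \in A -> x \in A.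

Definition remove_cand (P : seq {fset U}) (c : U) : seq {fset U} :=
  [seq B <- map (fun A => A `\ c) P | B != fset0].
Definition restrict_axis (s : seq U) (c : U) : seq U := filter (predC1 c) s.

Definition resistant_to_cloning (f : rule_type) : Prop :=
  forall C P a a', profile_over C P -> clones C P a a' ->
    (forall s, f C P s -> f (C `\ a) (remove_cand P a) (restrict_axis s a)) /\
    (forall t, f (C `\ a) (remove_cand P a) t ->
       exists2 s, f C P s & restrict_axis s a = t).

End Defs.

(* Main.v *)
Require Import Defs.
From mathcomp Require Import all_boot all_order all_algebra finmap reals.
From mathcomp Require Import ring lra zify.
Set Implicit Arguments. Unset Strict Implicit. Unset Printing Implicit Defensive.
Import Order.TTheory GRing.Theory Num.Theory.
Local Open Scope fset_scope.

Lemma imfset_seq (T : choiceType) (g : T -> T) (s : seq T) :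
  g @` [fset x in s] = [fset x in map g s].
Proof.
apply/fsetP => y; rewrite !inE; apply/imfsetP/mapP => [[x]|[x]].
  by rewrite /= inE => xs ->; exists x.
by move=> xs ->; exists x => //=; rewrite inE.
Qed.

Section Main.
Variables (U : choiceType) (R : realType) (f : rule_type U).
Hypothesis Hax : axis_rule f.
Hypothesis Hsc : scoring_rule R f.
Hypothesis Hneu : neutral f.
Hypothesis Hlin : consistent_with_linearity f.
Hypothesis Hres : resistant_to_cloning f.
Hypothesis Hprox : clone_proximity f.
Variable u : nat -> U.
Hypothesis u_inj : forall i j, (i < 5)%N -> (j < 5)%N -> u i = u j -> i = j.

Definition L (A : seq nat) : {fset U} := [fset x in map u A].
Lemma memL A y : (y \in L A) = (y \in map u A).
Proof. by rewrite inE. Qed.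

Definition inr5 (A : seq nat) := all (fun i => i < 5)%N A.

Lemma mem_mapu A i : inr5 A -> (i < 5)%N -> (u i \in map u A) = (i \in A).
Proof.
move=> /allP HA Hi; apply/mapP/idP => [[j jA /u_inj E]|iA]; last by exists i.
by rewrite E // HA.
Qed.

Lemma memLu A i : inr5 A -> (i < 5)%N -> (u i \in L A) = (i \in A).
Proof. by move=> HA Hi; rewrite memL mem_mapu. Qed.

Lemma index_mapu s i : inr5 s -> (i < 5)%N -> index (u i) (map u s) = index i s.
Proof.
elim: s => [|j s IH] //= /andP[Hj Hs] Hi.
case: (eqVneq i j) => [->|ne]; first by rewrite eqxx.
have -> : (u j == u i) = false.
  by apply/negbTE/eqP => /u_inj E; move: ne; rewrite E ?eqxx.
by rewrite IH.
Qed.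


Definition Ax n := permutations (iota 0 n).
Definition Cn n := L (iota 0 n).
Definition F n (P : seq (seq nat)) (s : seq nat) := f (Cn n) (map L P) (map u s).
Definition valid n (P : seq (seq nat)) :=
  all (fun A => (A != [::]) && all (fun i => (i < n)%N) A) P.
Definition pos (w A : seq nat) := map (index^~ w) A.

Lemma inAx n s : (s \in Ax n) = perm_eq s (iota 0 n).
Proof. by rewrite mem_permutations. Qed.

Lemma Ax_mem n s i : s \in Ax n -> (i \in s) = (i < n)%N.
Proof. by rewrite inAx => /perm_mem ->; rewrite mem_iota. Qed.

Lemma Ax_uniq n s : s \in Ax n -> uniq s.
Proof. by rewrite inAx => /perm_uniq ->; apply: iota_uniq. Qed.

Lemma Ax_size n s : s \in Ax n -> size s = n.
Proof. by rewrite inAx => /perm_size ->; rewrite size_iota. Qed.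

Lemma inr_le n A : (n <= 5)%N -> all (fun i => (i < n)%N) A -> inr5 A.
Proof. by move=> n5 /allP H; apply/allP => i /H /leq_trans; apply. Qed.

Lemma Ax_inr n s : (n <= 5)%N -> s \in Ax n -> inr5 s.
Proof. by move=> n5 sA; apply: (inr_le n5); apply/allP => i; rewrite (Ax_mem _ sA). Qed.

Lemma iota_inr n : (n <= 5)%N -> inr5 (iota 0 n).
Proof. by move=> n5; apply: (inr_le n5); apply/allP => i; rewrite mem_iota. Qed.

Lemma map_u_inj s t : inr5 s -> inr5 t -> map u s = map u t -> s = t.
Proof.
elim: s t => [|i s IH] [|j t] //= /andP[Hi Hs] /andP[Hj Ht] [/u_inj E /IH ->] //.
by rewrite E.
Qed.

Lemma uniq_mapu s : inr5 s -> uniq (map u s) = uniq s.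
Proof.
move=> Hs; apply: map_inj_in_uniq => i j /(allP Hs) Hi /(allP Hs) Hj; exact: u_inj.
Qed.

Lemma axis_of n s : (n <= 5)%N -> s \in Ax n -> is_axis (Cn n) (map u s).
Proof.
move=> n5 sA; split; first by rewrite uniq_mapu ?(Ax_uniq sA) ?(Ax_inr n5 sA).
move=> y; rewrite memL; apply/mapP/mapP => [[i iS ->]|[i iS ->]]; exists i => //.
  by rewrite mem_iota /= -(Ax_mem _ sA).
by rewrite (Ax_mem _ sA); move: iS; rewrite mem_iota.
Qed.

Lemma perm_iota_of n t : uniq t -> {subset t <= iota 0 n} -> size t = n -> t \in Ax n.
Proof.
move=> ut sub st; rewrite inAx; apply: uniq_perm => //; first exact: iota_uniq.
have := @uniq_min_size _ t (iota 0 n) ut sub; rewrite size_iota st leqnn.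
by move=> /(_ isT) [].
Qed.

Lemma index_iota0 n i : (i < n)%N -> index i (iota 0 n) = i.
Proof.
move=> Hi; have E := nth_iota 0 0 Hi; rewrite add0n in E.
by rewrite -{1}E index_uniq ?size_iota ?iota_uniq.
Qed.

Lemma axis_to n s : (n <= 5)%N -> is_axis (Cn n) s -> exists2 t, t \in Ax n & s = map u t.
Proof.
move=> n5 [us ms].
set t := map (fun y => index y (map u (iota 0 n))) s.
have Ht : map u t = s.
  rewrite -map_comp -[RHS]map_id; apply/eq_in_map => y /=.
  rewrite ms memL => /mapP [i iI ->]; rewrite index_mapu ?iota_inr //; last first.
    by move: iI; rewrite mem_iota /= => /leq_trans; apply.
  by rewrite index_iota0 //; move: iI; rewrite mem_iota.
have Htinr : inr5 t.
  apply/allP => i /mapP [y ys ->]; apply: (@leq_trans n) => //.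
  by have := index_mem y (map u (iota 0 n)); rewrite size_map size_iota -memL -ms ys.
exists t => //; apply: perm_iota_of.
- by rewrite -(uniq_mapu Htinr) Ht.
- move=> i /mapP [y ys ->]; rewrite mem_iota /=.
  by have := index_mem y (map u (iota 0 n)); rewrite size_map size_iota -memL -ms ys.
- have : perm_eq s (map u (iota 0 n)).
    apply: uniq_perm => //; first by rewrite uniq_mapu ?iota_uniq ?iota_inr.
    by move=> y; rewrite ms memL.
  by move/perm_size; rewrite size_map size_iota => <-; rewrite size_map.
Qed.

Lemma L_nonempty A : A != [::] -> L A != fset0.
Proof.
case: A => [|i A] // _; apply/eqP => /fsetP /(_ (u i)); by rewrite memL in_fset0 /= inE eqxx.
Qed.

Lemma profile_valid n P : (n <= 5)%N -> valid n P -> profile_over (Cn n) (map L P).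
Proof.
move=> n5 /allP HP B /mapP [A AP ->]; have /andP [An Ai] := HP A AP.
split; first exact: L_nonempty.
apply/fsubsetP => y; rewrite !memL => /mapP [i iA ->]; apply: map_f.
by rewrite mem_iota /= (allP Ai).
Qed.


Lemma eq_of_sum (I : eqType) (J : seq I) (a b : I -> R) :
  (forall j, j \in J -> b j <= a j)%R -> (\sum_(j <- J) a j <= \sum_(j <- J) b j)%R ->
  forall j, j \in J -> a j = b j.
Proof.
elim: J => [|j0 J IH] // H; rewrite !big_cons => Hs j.
have H0 : (b j0 <= a j0)%R by apply: H; rewrite inE eqxx.
have HJ : forall j, j \in J -> (b j <= a j)%R by move=> k kJ; apply: H; rewrite inE kJ orbT.
have Hsum : (\sum_(j <- J) b j <= \sum_(j <- J) a j)%R.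
  by rewrite big_seq_cond [X in (_ <= X)%R]big_seq_cond; apply: ler_sum => k /andP[kJ _]; apply: HJ.
have E0 : a j0 = b j0 by apply/eqP; rewrite eq_le H0 andbT; lra.
rewrite inE => /orP [/eqP -> //|jJ]; apply: IH => //; lra.
Qed.

Lemma argmin_sum (T I : eqType) (D : seq T) (Fp : T -> Prop) (J : seq I) (g : I -> T -> R) :
  (forall j, j \in J -> forall w, w \in D -> (Fp w <-> forall t, t \in D -> (g j w <= g j t)%R)) ->
  (exists2 w0, w0 \in D & Fp w0) -> J != [::] ->
  forall w, w \in D -> (Fp w <-> forall t, t \in D ->
     (\sum_(j <- J) g j w <= \sum_(j <- J) g j t)%R).
Proof.
move=> Hg [w0 w0D Fw0] Jn w wD; split.
  move=> Fw t tD; rewrite big_seq_cond [X in (_ <= X)%R]big_seq_cond.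
  by apply: ler_sum => j /andP[jJ _]; move: (Hg j jJ w wD) => [H _]; apply: H.
move=> Hs; case: J Jn Hg Hs => [|j0 J] // _ Hg Hs.
have Hle : forall j, j \in j0 :: J -> (g j w0 <= g j w)%R.
  by move=> j jJ; move: (Hg j jJ w0 w0D) => [H _]; apply: H.
have Heq := eq_of_sum Hle (Hs w0 w0D).
have j0J : j0 \in j0 :: J by rewrite inE eqxx.
apply/(Hg j0 j0J w wD) => t tD; rewrite (Heq j0 j0J).
by move: (Hg j0 j0J w0 w0D) => [H _]; apply: H.
Qed.

Definition rvp n (S : seq nat) := map (fun i => n.-1 - i)%N S.

Section Char.
Variable n : nat.
Hypothesis n5 : (n <= 5)%N.
Variable cost : {fset U} -> seq U -> R.
Hypothesis csc : forall P, profile_over (Cn n) P -> forall s,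
  f (Cn n) P s <-> (is_axis (Cn n) s /\ forall t, is_axis (Cn n) t ->
     (\sum_(A <- P) cost A s <= \sum_(A <- P) cost A t)%R).

Definition G Q v := (\sum_(A <- Q) cost (L A) (map u v))%R.

Lemma c1 Q v : valid n Q -> v \in Ax n ->
  (F n Q v <-> forall t, t \in Ax n -> (G Q v <= G Q t)%R).
Proof.
move=> vQ vA; rewrite /F csc; last exact: profile_valid.
split => [[_ H] t tA|H]; first by have := H (map u t) (axis_of n5 tA); rewrite !big_map.
split; first exact: axis_of.
move=> t' /(axis_to n5) [t tA ->]; rewrite !big_map; exact: H.
Qed.

Lemma nth_Ax s i : s \in Ax n -> (i < n)%N -> (nth 0 s i < n)%N.
Proof. by move=> sA Hi; rewrite -(Ax_mem _ sA) mem_nth // (Ax_size sA). Qed.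

Lemma relab_Ax s v : s \in Ax n -> v \in Ax n -> map (nth 0 s) v \in Ax n.
Proof.
move=> sA vA; apply: perm_iota_of; last by rewrite size_map (Ax_size vA).
  rewrite map_inj_in_uniq ?(Ax_uniq vA) // => i j; rewrite !(Ax_mem _ vA) => Hi Hj.
  by move/eqP; rewrite nth_uniq ?(Ax_size sA) ?(Ax_uniq sA) // => /eqP.
by move=> j /mapP [i iv ->]; rewrite mem_iota /= nth_Ax // -(Ax_mem _ vA).
Qed.

Lemma valid_relab s Q : s \in Ax n -> valid n Q -> valid n (map (map (nth 0 s)) Q).
Proof.
move=> sA /allP H; apply/allP => B /mapP [A AQ ->]; have /andP [An Ai] := H A AQ.
apply/andP; split; first by case: (A) An.
by apply/allP => j /mapP [i iA ->]; apply: nth_Ax => //; apply: (allP Ai).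
Qed.

Definition pis (s : seq nat) (y : U) :=
  if y \in map u (iota 0 n) then u (nth 0 s (index y (map u (iota 0 n)))) else y.

Lemma pis_u s i : (i < n)%N -> pis s (u i) = u (nth 0 s i).
Proof.
move=> Hi; have Hi5 : (i < 5)%N by apply: leq_trans n5.
rewrite /pis mem_mapu ?iota_inr // mem_iota Hi /= index_mapu ?iota_inr //.
by rewrite index_iota0.
Qed.

Lemma c2 Q v s : valid n Q -> v \in Ax n -> s \in Ax n ->
  (F n Q v <-> F n (map (map (nth 0 s)) Q) (map (nth 0 s) v)).
Proof.
move=> vQ vA sA.
have inC y : y \in Cn n -> exists2 i, (i < n)%N & y = u i.
  by rewrite memL => /mapP [i]; rewrite mem_iota => /= Hi ->; exists i.
have pinj : {in Cn n &, injective (pis s)}.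
  move=> y1 y2 /inC [i Hi ->] /inC [j Hj ->]; rewrite !pis_u //.
  move/u_inj; rewrite !(leq_trans (nth_Ax sA _) n5) // => /(_ isT isT) /eqP.
  by rewrite nth_uniq ?(Ax_size sA) ?(Ax_uniq sA) // => /eqP ->.
have pimg : pis s @` Cn n = Cn n.
  apply/fsetP => y; apply/imfsetP/idP => [[z /= /inC [i Hi ->] ->]|].
    by rewrite pis_u // memL map_f // mem_iota /= nth_Ax.
  move=> /inC [j Hj ->]; have : j \in s by rewrite (Ax_mem _ sA).
  move=> /(nthP 0) [i]; rewrite (Ax_size sA) => Hi <-; exists (u i); last by rewrite pis_u.
  by rewrite /= memL map_f // mem_iota.
have Hmap A : all (fun i => (i < n)%N) A -> map (pis s) (map u A) = map u (map (nth 0 s) A).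
  by move=> /allP HA; rewrite -!map_comp; apply/eq_in_map => i /HA Hi /=; rewrite pis_u.
have Hren : rename_profile (pis s) (map L Q) = map L (map (map (nth 0 s)) Q).
  rewrite /rename_profile -!map_comp; apply/eq_in_map => A AQ /=.
  have /andP [_ Ai] := allP vQ A AQ.
  by rewrite /L imfset_seq Hmap.
have Hv : all (fun i => (i < n)%N) v by apply/allP => i; rewrite (Ax_mem _ vA).
have := Hneu pinj pimg (profile_valid n5 vQ); rewrite Hren => HN.
rewrite /F; split => [Fv|]; first by apply/HN; exists (map u v) => //; rewrite Hmap.
move=> /HN [s0 Fs0 E]; have [_ [ax0 _]] := Hax (profile_valid n5 vQ).
have [t0 t0A Es0] := axis_to n5 (ax0 _ Fs0); rewrite Es0 in Fs0 E.
have Ht0 : all (fun i => (i < n)%N) t0 by apply/allP => i; rewrite (Ax_mem _ t0A).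
rewrite Hmap // in E; move/map_u_inj: E.
have rinr x : x \in Ax n -> inr5 (map (nth 0 s) x).
  by move=> xA; apply: (Ax_inr n5); apply: relab_Ax.
move=> /(_ (rinr _ vA) (rinr _ t0A)) E.
suff -> : v = t0 by [].
have := relab_Ax sA vA; have := relab_Ax sA t0A.
move: E; move/(congr1 (map (index^~ s))); rewrite -!map_comp.
have Hid x : x \in Ax n -> map (index^~ s \o nth 0 s) x = x.
  move=> xA; rewrite -[RHS]map_id; apply/eq_in_map => i; rewrite (Ax_mem _ xA) => Hi /=.
  by rewrite index_uniq ?(Ax_size sA) ?(Ax_uniq sA).
by rewrite !Hid.
Qed.


Definition h s P w := G (map (map (nth 0 s)) P) (map (nth 0 s) w).

Lemma relab_surj s t2 : s \in Ax n -> t2 \in Ax n ->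
  exists2 t, t \in Ax n & map (nth 0 s) t = t2.
Proof.
move=> sA tA; exists (map (index^~ s) t2).
  apply: perm_iota_of; last by rewrite size_map (Ax_size tA).
    rewrite map_inj_in_uniq ?(Ax_uniq tA) // => i j iT jT E.
    by rewrite -(nth_index 0 (_ : i \in s)) ?E ?nth_index // (Ax_mem _ sA) -(Ax_mem _ tA).
  move=> j /mapP [i iT ->]; rewrite mem_iota /= -(Ax_size sA) index_mem.
  by rewrite (Ax_mem _ sA) -(Ax_mem _ tA).
rewrite -map_comp -[RHS]map_id; apply/eq_in_map => i iT /=.
by rewrite nth_index // (Ax_mem _ sA) -(Ax_mem _ tA).
Qed.

Lemma c3 s P w : s \in Ax n -> valid n P -> w \in Ax n ->
  (F n P w <-> forall t, t \in Ax n -> (h s P w <= h s P t)%R).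
Proof.
move=> sA vP wA; rewrite (c2 vP wA sA) c1 ?valid_relab ?relab_Ax //.
split => H t tA; first by apply: H; apply: relab_Ax.
by have [t0 t0A <-] := relab_surj sA tA; apply: H.
Qed.

Lemma Fex P : valid n P -> exists2 w0, w0 \in Ax n & F n P w0.
Proof.
move=> vP; have [[s0 Fs0] [ax _]] := Hax (profile_valid n5 vP).
have [w0 w0A E] := axis_to n5 (ax _ Fs0); by exists w0 => //; rewrite /F -E.
Qed.

Lemma rev_Ax w : w \in Ax n -> rev w \in Ax n.
Proof. by rewrite !inAx perm_rev. Qed.

Lemma Frev P w : valid n P -> (F n P w <-> F n P (rev w)).
Proof.
move=> vP; have [_ [_ rv]] := Hax (profile_valid n5 vP).
rewrite /F map_rev; split => [|H]; first exact: rv.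
by rewrite -(revK (map u w)); apply: rv.
Qed.

Definition gg P s w := (\sum_(b <- [:: false; true]) (if b then h s P (rev w) else h s P w))%R.
Definition K P w := (\sum_(s <- Ax n) gg P s w)%R.

Lemma c6 P w : valid n P -> w \in Ax n ->
  (F n P w <-> forall t, t \in Ax n -> (K P w <= K P t)%R).
Proof.
move=> vP; apply: argmin_sum; last 2 first.
- exact: Fex.
- by have [w0 w0A _] := Fex vP; case: (Ax n) w0A.
move=> s sA {}w wA; apply: argmin_sum => //; last exact: Fex.
move=> [] _ {}w {}wA; last exact: c3.
rewrite (Frev _ vP) (c3 sA vP (rev_Ax wA)).
split => H t tA; first by apply: H; apply: rev_Ax.
by rewrite -(revK t); apply: H; apply: rev_Ax.
Qed.

Definition Y S := (\sum_(s <- Ax n) cost (L (map (nth 0 s) S)) (map u s))%R.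
Definition X S := (Y S + Y (rvp n S))%R.
Definition H P w := (\sum_(A <- P) X (pos w A))%R.

Lemma reindex v : v \in Ax n -> perm_eq (map (fun s => map (nth 0 s) v) (Ax n)) (Ax n).
Proof.
move=> vA.
have inj : {in Ax n &, injective (fun s => map (nth 0 s) v)}.
  move=> s1 s2 s1A s2A E; apply: (@eq_from_nth _ 0); first by rewrite (Ax_size s1A) (Ax_size s2A).
  move=> i; rewrite (Ax_size s1A) => Hi.
  have iv : (index i v < size v)%N by rewrite index_mem (Ax_mem _ vA).
  have := congr1 (nth 0 ^~ (index i v)) E; rewrite /= !(nth_map 0) //.
  by rewrite nth_index // (Ax_mem _ vA).
have U1 : uniq (map (fun s => map (nth 0 s) v) (Ax n)).
  by rewrite map_inj_in_uniq // permutations_uniq.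
have sub : {subset map (fun s => map (nth 0 s) v) (Ax n) <= Ax n}.
  by move=> x /mapP [s sA ->]; apply: relab_Ax.
have [_ E] := uniq_min_size U1 sub (eq_leq (esym (size_map _ _))).
by apply: uniq_perm => //; apply: permutations_uniq.
Qed.

Lemma c7 P v : valid n P -> v \in Ax n ->
  (\sum_(s <- Ax n) h s P v)%R = (\sum_(A <- P) Y (pos v A))%R.
Proof.
move=> vP vA; rewrite /h /G.
under eq_bigr do rewrite big_map.
rewrite exchange_big /=; rewrite big_seq_cond [RHS]big_seq_cond.
apply: eq_bigr => A /andP [AP _]; have /andP [_ /allP Ai] := allP vP A AP.
rewrite /Y; symmetry; rewrite -(perm_big _ (reindex vA)) big_map; apply: eq_bigr => s _.
congr (cost (L _) _); rewrite /pos -map_comp; apply/eq_in_map => a aA /=.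
have av : a \in v by rewrite (Ax_mem _ vA) Ai.
by rewrite (nth_map 0) ?index_mem // nth_index.
Qed.

Lemma index_rev_Ax w a : w \in Ax n -> a \in w -> index a (rev w) = (n.-1 - index a w)%N.
Proof.
move=> wA aw; have sw := Ax_size wA; have ia : (index a w < n)%N by rewrite -sw index_mem.
have Hlt : (n.-1 - index a w < size w)%N.
  by rewrite sw; case: (n) ia => // m _; rewrite ltnS leq_subr.
rewrite -{1}(nth_index 0 aw).
have E : nth 0 (rev w) (n.-1 - index a w) = nth 0 w (index a w).
  rewrite nth_rev // sw; congr nth; case: (n) ia => // m; rewrite ltnS => ia /=.
  by rewrite subSS subKn.
by rewrite -E index_uniq ?rev_uniq ?(Ax_uniq wA) // size_rev.
Qed.

Lemma KH P w : valid n P -> w \in Ax n -> K P w = H P w.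
Proof.
move=> vP wA; rewrite /K /gg.
under eq_bigr do rewrite !big_cons big_nil addr0.
rewrite big_split /= !c7 ?rev_Ax // -big_split /=.
rewrite big_seq_cond [RHS]big_seq_cond; apply: eq_bigr => A /andP [AP _].
have /andP [_ /allP Ai] := allP vP A AP.
rewrite /X; congr (_ + Y _)%R; rewrite /pos /rvp -map_comp; apply/eq_in_map => a aA /=.
by rewrite index_rev_Ax // (Ax_mem _ wA) Ai.
Qed.

Lemma charH P w : valid n P -> w \in Ax n ->
  (F n P w <-> forall t, t \in Ax n -> (H P w <= H P t)%R).
Proof.
move=> vP wA; rewrite c6 // KH //.
by split => Hc t tA; have := Hc t tA; rewrite KH.
Qed.

Lemma Xmem S S' : S =i S' -> X S = X S'.
Proof.
move=> E; rewrite /X /Y; congr (_ + _)%R; apply: eq_bigr => s _; congr (cost _ _);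
  apply/fsetP => y; rewrite !memL; do 2 apply: eq_mem_map => //.
by rewrite /rvp; apply: eq_mem_map.
Qed.

Lemma Xrev S : all (fun i => (i < n)%N) S -> X (rvp n S) = X S.
Proof.
move=> /allP HS; have E : rvp n (rvp n S) = S.
  rewrite /rvp -map_comp -[RHS]map_id; apply/eq_in_map => i /HS Hi /=.
  by case: (n) Hi => // m; rewrite ltnS /= => Hi; rewrite subKn.
by rewrite /X E addrC.
Qed.

End Char.

Definition Hs (X : seq nat -> R) P w := (\sum_(A <- P) X (pos w A))%R.

Lemma charX n : (n <= 5)%N -> exists X : seq nat -> R,
  [/\ forall P w, valid n P -> w \in Ax n ->
        (F n P w <-> forall t, t \in Ax n -> (Hs X P w <= Hs X P t)%R),
      forall S S', S =i S' -> X S = X S' &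
      forall S, all (fun i => (i < n)%N) S -> X (rvp n S) = X S].
Proof.
move=> n5; have [cost [_ csc]] := Hsc (Cn n).
exists (X n cost); split.
- by move=> P w vP wA; apply: charH.
- exact: Xmem.
- exact: Xrev.
Qed.

Lemma Hs1 (X : seq nat -> R) A w : Hs X [:: A] w = X (pos w A).
Proof. by rewrite /Hs big_seq1. Qed.

Section Lin.
Variable n : nat.
Hypothesis n5 : (n <= 5)%N.
Variable X : seq nat -> R.
Hypothesis HX : forall P w, valid n P -> w \in Ax n ->
        (F n P w <-> forall t, t \in Ax n -> (Hs X P w <= Hs X P t)%R).

Definition tA A := A ++ [seq i <- iota 0 n | i \notin A].

Lemma tA_Ax A : uniq A -> all (fun i => (i < n)%N) A -> tA A \in Ax n.
Proof.
move=> uA /allP HA; rewrite inAx /tA.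
have E : perm_eq A [seq i <- iota 0 n | i \in A].
  apply: uniq_perm => //; first by rewrite filter_uniq ?iota_uniq.
  by move=> i; rewrite mem_filter mem_iota /=; case iA: (i \in A) => //=; rewrite HA.
apply: perm_trans (perm_cat E (perm_refl _)) _.
by rewrite (perm_filterC (mem A)).
Qed.

Lemma interval_prefix A r : inr5 (A ++ r) -> is_interval (map u (A ++ r)) (L A).
Proof.
move=> Hr a b c; rewrite !memL => /mapP [i iA ->] /mapP [j jA ->] /mapP [k kAr ->].
have Hin l : l \in A ++ r -> (l < 5)%N by move/(allP Hr).
have i5 : (i < 5)%N by apply: Hin; rewrite mem_cat iA.
have j5 : (j < 5)%N by apply: Hin; rewrite mem_cat jA.
have k5 := Hin k kAr.
rewrite !index_mapu // => _.
rewrite !index_cat jA; case: ifP => [kA _|_]; first by rewrite map_f.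
by move=> /(leq_ltn_trans (leq_addr _ _)); rewrite ltnNge index_size.
Qed.

Lemma pos_prefix A r : uniq A -> pos (A ++ r) A = iota 0 (size A).
Proof.
move=> uA; apply: (@eq_from_nth _ 0); first by rewrite size_map size_iota.
move=> i; rewrite size_map => Hi; rewrite (nth_map 0) // nth_iota // add0n.
by rewrite index_cat mem_nth // index_uniq.
Qed.

Lemma valid1 A : A != [::] -> all (fun i => (i < n)%N) A -> valid n [:: A].
Proof. by move=> An Ai; rewrite /valid /= An Ai. Qed.

Lemma lin1 A s : A != [::] -> uniq A -> all (fun i => (i < n)%N) A -> s \in Ax n ->
  (F n [:: A] s <-> is_interval (map u s) (L A)).
Proof.
move=> An uA Ai sA.
have vP := profile_valid n5 (valid1 An Ai).
have lin : linear_profile (Cn n) [:: L A].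
  exists (map u (tA A)); split; first by apply: axis_of => //; apply: tA_Ax.
  move=> B; rewrite inE => /eqP ->; apply: interval_prefix.
  exact: (Ax_inr n5 (tA_Ax uA Ai)).
rewrite /F (Hlin vP lin); split => [[_ /(_ (L A))] H|H]; first by apply: H; rewrite inE.
by split; [apply: axis_of | move=> B; rewrite inE => /eqP ->].
Qed.

Lemma Xmin A t : A != [::] -> uniq A -> all (fun i => (i < n)%N) A -> t \in Ax n ->
  (X (iota 0 (size A)) <= X (pos t A))%R.
Proof.
move=> An uA Ai tAx; have tAA := tA_Ax uA Ai.
have : F n [:: A] (tA A).
  by apply/lin1 => //; apply: interval_prefix; apply: (Ax_inr n5 tAA).
move/(HX (valid1 An Ai) tAA)/(_ t tAx); by rewrite !Hs1 /tA pos_prefix.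
Qed.

Lemma pos_id A : all (fun i => (i < n)%N) A -> pos (iota 0 n) A = A.
Proof.
by move=> /allP HA; rewrite /pos -[RHS]map_id; apply/eq_in_map => i /HA Hi; rewrite index_iota0.
Qed.

Lemma id_Ax : iota 0 n \in Ax n.
Proof. by rewrite inAx. Qed.

Lemma Xint m k : (0 < k)%N -> (m + k <= n)%N -> X (iota m k) = X (iota 0 k).
Proof.
move=> k0 mk; set A := iota m k.
have An : A != [::] by rewrite /A; case: (k) k0.
have uA : uniq A by apply: iota_uniq.
have Ai : all (fun i => (i < n)%N) A.
  by apply/allP => i; rewrite mem_iota => /andP [_ /leq_trans]; apply.
have idA := id_Ax.
have : F n [:: A] (iota 0 n).
  apply/lin1 => // a b c; rewrite !memL => /mapP [i iA ->] /mapP [j jA ->] /mapP [l lA ->].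
  have Hi5 z : z \in iota 0 n -> (z < 5)%N.
    by rewrite mem_iota => /andP [_ /leq_trans]; apply.
  have Ain z : z \in A -> z \in iota 0 n by move/(allP Ai); rewrite mem_iota.
  have i5 := Hi5 _ (Ain _ iA); have j5 := Hi5 _ (Ain _ jA); have l5 := Hi5 _ lA.
  have I5 := iota_inr n5.
  rewrite !index_mapu //.
  have iN : (i < n)%N by move: (Ain _ iA); rewrite mem_iota.
  have jN : (j < n)%N by move: (Ain _ jA); rewrite mem_iota.
  have lN : (l < n)%N by move: lA; rewrite mem_iota.
  rewrite !index_iota0 // => Hil Hlj; apply: map_f.
  move: iA jA; rewrite !mem_iota => /andP [mi _] /andP [_ jm].
  by rewrite (leq_trans mi (ltnW Hil)) (ltn_trans Hlj jm).
move/(HX (valid1 An Ai) idA)/(_ (tA A) (tA_Ax uA Ai)); rewrite !Hs1 /tA pos_prefix // pos_id //.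
rewrite size_iota => H1; apply/eqP; rewrite eq_le H1 /=.
by have := Xmin An uA Ai idA; rewrite pos_id // size_iota.
Qed.

Lemma Xstrict S i j k : S != [::] -> uniq S -> all (fun i => (i < n)%N) S ->
  i \in S -> k \in S -> j \notin S -> (i < j < k)%N -> (j < n)%N ->
  (X (iota 0 (size S)) < X S)%R.
Proof.
move=> Sn uS Si iS kS jS /andP [ij jk] jn.
have idA := id_Ax.
have nF : ~ F n [:: S] (iota 0 n).
  move/lin1 => /(_ Sn uS Si idA) H.
  have zn z : z \in S -> (z < n)%N by move/(allP Si).
  have Hi5 z : (z < n)%N -> (z < 5)%N by move/leq_trans; apply.
  have iN := zn _ iS; have kN := zn _ kS.
  have Hui : u i \in L S by rewrite memL map_f.
  have Huk : u k \in L S by rewrite memL map_f.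
  have Huj : u j \in map u (iota 0 n) by rewrite map_f // mem_iota.
  have Ix z : (z < n)%N -> index (u z) (map u (iota 0 n)) = z.
    by move=> zN; rewrite index_mapu ?iota_inr ?Hi5 // index_iota0.
  have := H _ _ _ Hui Huk Huj; rewrite !Ix // => /(_ ij jk).
  by rewrite memL mem_mapu ?Hi5 ?(inr_le n5 Si) // (negbTE jS).
have : ~~ all (fun t => X (pos (iota 0 n) S) <= X (pos t S))%R (Ax n).
  apply/negP => /allP H; apply: nF; apply/(HX (valid1 Sn Si) idA) => t tA; rewrite !Hs1.
  exact: H.
case/allPn => t tAx; rewrite -ltNge pos_id // => H.
by apply: le_lt_trans H; apply: Xmin.
Qed.

End Lin.

Definition clP (x : nat) (P' : seq (seq nat)) := all (fun A => (4 \in A) == (x \in A)) P'.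
Definition rem4 (P' : seq (seq nat)) := map (filter (fun i => i != 4)) P'.

Lemma clones_nat P' x : valid 5 P' -> (x < 4)%N -> clP x P' ->
  clones (Cn 5) (map L P') (u 4) (u x).
Proof.
move=> vP x4 cP; have x5 : (x < 5)%N by apply: ltn_trans x4 _.
split.
- by rewrite memL map_f // mem_iota.
- by rewrite memL map_f // mem_iota.
- by apply/eqP => /u_inj E; move: x4; rewrite -E.
- move=> B /mapP [A AP ->]; have /andP [_ Ai] := allP vP A AP.
  by rewrite !memLu ?(inr_le _ Ai) //; apply/eqP; apply: (allP cP).
Qed.

Lemma Lrem A : inr5 A -> L A `\ u 4 = L [seq i <- A | i != 4].
Proof.
move=> HA; apply/fsetP => y; rewrite in_fsetD1 !memL.
apply/idP/idP.
  move=> /andP [yn /mapP [i iA Ey]]; rewrite Ey; apply: map_f.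
  rewrite mem_filter iA andbT; apply/eqP => i4; by move: yn; rewrite Ey i4 eqxx.
move=> /mapP [i]; rewrite mem_filter => /andP [i4 iA] ->; rewrite map_f // andbT.
by apply/eqP => /u_inj E; move: i4; rewrite E ?eqxx //; apply: (allP HA).
Qed.

Lemma remove_nat P' : valid 4 (rem4 P') -> valid 5 P' ->
  remove_cand (map L P') (u 4) = map L (rem4 P').
Proof.
move=> vP vP'; rewrite /remove_cand -map_comp.
have -> : map (fun A => L A `\ u 4) P' = map L (rem4 P').
  rewrite /rem4 -map_comp; apply/eq_in_map => A AP /=; rewrite Lrem //.
  by have /andP [_ Ai] := allP vP' A AP; apply: inr_le Ai.
apply/all_filterP/allP => B /mapP [A AP ->]; have /andP [An _] := allP vP A AP.
exact: L_nonempty.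
Qed.

Lemma Cn5rem : Cn 5 `\ u 4 = Cn 4.
Proof. by rewrite /Cn Lrem ?iota_inr. Qed.

Lemma restrict_nat s : inr5 s -> restrict_axis (map u s) (u 4) = map u [seq i <- s | i != 4].
Proof.
move=> Hs; rewrite /restrict_axis filter_map; congr map; apply: eq_in_filter => i iS /=.
apply/idP/idP => [H|H]; first by apply: contraNneq H => ->.
by apply/eqP => /u_inj E; move: H; rewrite E ?eqxx //; apply: (allP Hs).
Qed.

Lemma res2_nat P' x t : valid 4 (rem4 P') -> valid 5 P' -> (x < 4)%N -> clP x P' ->
  t \in Ax 4 -> F 4 (rem4 P') t ->
  exists s', [/\ s' \in Ax 5, [seq i <- s' | i != 4] = t & F 5 P' s'].
Proof.
move=> vP vP' x4 cP tA Ft.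
have [_ H2] := Hres (profile_valid (leqnn 5) vP') (clones_nat vP' x4 cP).
move: Ft; rewrite /F -Cn5rem -remove_nat // => /H2 [s Fs Es].
have [_ [ax _]] := Hax (profile_valid (leqnn 5) vP').
have [s' s'A Es'] := axis_to (leqnn 5) (ax _ Fs).
exists s'; split => //; last by rewrite /F -Es'.
move: Es; rewrite Es' restrict_nat ?(Ax_inr _ s'A) //.
move/map_u_inj; apply; last exact: (Ax_inr _ tA).
apply/allP => i; rewrite mem_filter => /andP [_ /(allP (Ax_inr (leqnn 5) s'A))] //.
Qed.

Lemma prox_nat P' x s y A : valid 5 P' -> (x < 4)%N -> clP x P' -> s \in Ax 5 ->
  F 5 P' s -> y \in s ->
  ((index 4 s < index y s < index x s) || (index x s < index y s < index 4 s))%N ->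
  A \in P' -> 4 \in A -> x \in A -> y \in A.
Proof.
move=> vP' x4 cP sA Fs ys Hb AP A4 Ax'.
have x5 : (x < 5)%N by apply: ltn_trans x4 _.
have Hs5 := Ax_inr (leqnn 5) sA.
have y5 : (y < 5)%N by apply: (allP Hs5).
have /andP [_ Ai] := allP vP' A AP.
have := Hprox (profile_valid (leqnn 5) vP') (clones_nat vP' x4 cP) Fs (x:=u y) (A:=L A).
rewrite map_f // !index_mapu // => /(_ isT).
rewrite -(memLu (inr_le _ Ai)) //; apply.
- by apply/orP.
- exact: map_f.
- by rewrite memLu ?(inr_le _ Ai).
- by rewrite memLu ?(inr_le _ Ai).
Qed.

Fixpoint ins (x : nat) (s : seq nat) :=
  if s is y :: s' then (if (x <= y)%N then x :: s else y :: ins x s') else [:: x].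
Fixpoint isort (s : seq nat) := if s is x :: s' then ins x (isort s') else [::].

Lemma perm_ins x s : perm_eq (ins x s) (x :: s).
Proof.
elim: s => [|y s IH] //=; case: ifP => _ //.
apply/permP => p /=; by rewrite (permP IH) /= addnCA.
Qed.

Lemma perm_isort s : perm_eq (isort s) s.
Proof.
elim: s => [|x s IH] //=; apply/permP => p; rewrite (permP (perm_ins _ _)) /= (permP IH) //.
Qed.

Lemma HsI (X : seq nat -> R) P w : (forall S S', S =i S' -> X S = X S') ->
  Hs X P w = (\sum_(A <- P) X (isort (pos w A)))%R.
Proof. by move=> Xm; apply: eq_bigr => A _; apply: Xm => z; rewrite (perm_mem (perm_isort _)). Qed.

Lemma forall_list (T : eqType) (Pr : T -> Prop) s :
  foldr (fun x acc => Pr x /\ acc) True s -> forall t, t \in s -> Pr t.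
Proof.
elim: s => [|x s IH] //= [Hx Hs] t; rewrite inE => /orP [/eqP -> //|]; exact: IH.
Qed.

Lemma revfact (X : seq nat -> R) n S S' : (forall S S', S =i S' -> X S = X S') ->
  (forall S, all (fun i => (i < n)%N) S -> X (rvp n S) = X S) ->
  all (fun i => (i < n)%N) S -> perm_eq (rvp n S) S' -> X S' = X S.
Proof. by move=> Xm Xr HS E; rewrite -(Xr _ HS); apply: Xm => z; rewrite (perm_mem E). Qed.

Definition between x s y := ((index 4 s < index y s < index x s) || (index x s < index y s < index 4 s))%N.
Definition prox_ok (P' : seq (seq nat)) x s :=
  all (fun y => ~~ between x s y || all (fun A => ((4 \in A) && (x \in A)) ==> (y \in A)) P') s.

Lemma prox_b P' x s : valid 5 P' -> (x < 4)%N -> clP x P' -> s \in Ax 5 ->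
  F 5 P' s -> prox_ok P' x s.
Proof.
move=> vP x4 cP sA Fs; apply/allP => y ys; apply/orP.
case Hb : (between x s y); [right|by left].
apply/allP => A AP; apply/implyP => /andP [A4 Ax'].
exact: (prox_nat vP x4 cP sA Fs ys Hb AP A4 Ax').
Qed.

Section Top.
Variable X : seq nat -> R.
Hypothesis HX : forall P w, valid 5 P -> w \in Ax 5 ->
        (F 5 P w <-> forall t, t \in Ax 5 -> (Hs X P w <= Hs X P t)%R).

Lemma lift_both P' x t a1 a2 : valid 4 (rem4 P') -> valid 5 P' -> (x < 4)%N -> clP x P' ->
  t \in Ax 4 -> F 4 (rem4 P') t ->
  perm_eq [seq s <- Ax 5 | ([seq i <- s | i != 4] == t) && prox_ok P' x s] [:: a1; a2] ->
  Hs X P' a1 = Hs X P' a2 -> F 5 P' a1 /\ F 5 P' a2.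
Proof.
move=> vP vP' x4 cP tA Ft E Heq.
have [s' [s'A Es' Fs']] := res2_nat vP vP' x4 cP tA Ft.
have : s' \in [:: a1; a2] by rewrite -(perm_mem E) mem_filter s'A Es' eqxx prox_b.
have a1A : a1 \in Ax 5.
  by have := mem_head a1 [:: a2]; rewrite -(perm_mem E) mem_filter => /andP [].
have a2A : a2 \in Ax 5.
  have : a2 \in [:: a1; a2] by rewrite !inE eqxx orbT.
  by rewrite -(perm_mem E) mem_filter => /andP [].
have Hmin := (HX vP' s'A).1 Fs'.
rewrite !inE => /orP [] /eqP Ea; rewrite Ea in Hmin; split.
- by apply/(HX vP' a1A).
- by apply/(HX vP' a2A) => t' t'A; rewrite -Heq; apply: Hmin.
- by apply/(HX vP' a1A) => t' t'A; rewrite Heq; apply: Hmin.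
- by apply/(HX vP' a2A).
Qed.

Lemma viol_lt P' x w0 w : valid 5 P' -> (x < 4)%N -> clP x P' -> w \in Ax 5 ->
  prox_ok P' x w = false -> F 5 P' w0 -> w0 \in Ax 5 -> (Hs X P' w0 < Hs X P' w)%R.
Proof.
move=> vP' x4 cP wA pw Fw0 w0A.
have nF : ~ F 5 P' w by move/(prox_b vP' x4 cP wA); rewrite pw.
have : ~~ all (fun t => Hs X P' w <= Hs X P' t)%R (Ax 5).
  by apply/negP => /allP H; apply: nF; apply/(HX vP' wA) => t tA; apply: H.
case/allPn => t tA; rewrite -ltNge => H; apply: le_lt_trans H.
exact: (HX vP' w0A).1 Fw0 t tA.
Qed.

Lemma both_eq P' a b : valid 5 P' -> a \in Ax 5 -> b \in Ax 5 -> F 5 P' a -> F 5 P' b ->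
  Hs X P' a = Hs X P' b.
Proof.
move=> vP aA bA Fa Fb; apply/eqP; rewrite eq_le.
by rewrite ((HX vP aA).1 Fa b bA) ((HX vP bA).1 Fb a aA).
Qed.

End Top.

Definition Ax4L : seq (seq nat) := [:: [:: 1; 2; 0; 3]; [:: 2; 1; 0; 3]; [:: 0; 2; 1; 3]; [:: 2; 0; 1; 3]; [:: 1; 0; 2; 3]; [:: 0; 1; 2; 3]; [:: 1; 3; 0; 2]; [:: 3; 1; 0; 2]; [:: 0; 3; 1; 2]; [:: 3; 0; 1; 2]; [:: 1; 0; 3; 2]; [:: 0; 1; 3; 2]; [:: 3; 2; 0; 1]; [:: 2; 3; 0; 1]; [:: 0; 2; 3; 1]; [:: 2; 0; 3; 1]; [:: 3; 0; 2; 1]; [:: 0; 3; 2; 1]; [:: 2; 1; 3; 0]; [:: 1; 2; 3; 0]; [:: 3; 1; 2; 0]; [:: 1; 3; 2; 0]; [:: 2; 3; 1; 0]; [:: 3; 2; 1; 0]].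

Lemma Ax4E : Ax 4 = Ax4L.
Proof. by vm_compute. Qed.

Definition P1 : seq (seq nat) := [:: [:: 0; 1; 3]; [:: 0; 2; 3]; [:: 1; 2; 3]].
Definition Q3 : seq (seq nat) := [:: [:: 0; 1; 2]; [:: 0; 1; 3]; [:: 0; 2; 3]; [:: 1; 2; 3]].
Definition Tr : seq (seq nat) := [:: [:: 1; 2]; [:: 1; 3]; [:: 2; 3]].
Definition P4 : seq (seq nat) := [:: [:: 1; 2]; [:: 1; 3]; [:: 2; 3]; [:: 0; 1; 3]; [:: 0; 2; 3]; [:: 1; 2; 3]].

Lemma C4facts : F 4 P1 [:: 0; 1; 3; 2] /\ F 4 Q3 [:: 1; 2; 0; 3] /\ F 4 Q3 [:: 0; 1; 2; 3] /\
  F 4 Tr [:: 0; 3; 2; 1] /\ F 4 Tr [:: 0; 1; 2; 3] /\ F 4 P4 [:: 1; 3; 2; 0] /\ F 4 P4 [:: 0; 1; 3; 2].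
Proof.
have [X4 [ch4 m4 r4]] := charX (n:=4) isT.
have hs4 P w : Hs X4 P w = (\sum_(A <- P) X4 (isort (pos w A)))%R by apply: HsI.
have e12 : X4 [:: 1; 2] = X4 [:: 0; 1] := Xint (n:=4) isT ch4 (m:=1) (k:=2) isT isT.
have e23 : X4 [:: 2; 3] = X4 [:: 0; 1] := Xint (n:=4) isT ch4 (m:=2) (k:=2) isT isT.
have e123 : X4 [:: 1; 2; 3] = X4 [:: 0; 1; 2] := Xint (n:=4) isT ch4 (m:=1) (k:=3) isT isT.
have e13 : X4 [:: 1; 3] = X4 [:: 0; 2] := revfact m4 r4 (S:=[:: 0; 2]) (S':=[:: 1; 3]) isT isT.
have e023 : X4 [:: 0; 2; 3] = X4 [:: 0; 1; 3] := revfact m4 r4 (S:=[:: 0; 1; 3]) (S':=[:: 0; 2; 3]) isT isT.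
have s02 : (X4 [:: 0; 1] < X4 [:: 0; 2])%R :=
  Xstrict (n:=4) isT ch4 (S:=[:: 0; 2]) (i:=0) (j:=1) (k:=2) isT isT isT isT isT isT isT isT.
have s03 : (X4 [:: 0; 1] < X4 [:: 0; 3])%R :=
  Xstrict (n:=4) isT ch4 (S:=[:: 0; 3]) (i:=0) (j:=1) (k:=3) isT isT isT isT isT isT isT isT.
have s013 : (X4 [:: 0; 1; 2] < X4 [:: 0; 1; 3])%R :=
  Xstrict (n:=4) isT ch4 (S:=[:: 0; 1; 3]) (i:=1) (j:=2) (k:=3) isT isT isT isT isT isT isT isT.
have mem4 P t : valid 4 P -> t \in Ax 4 ->
   foldr (fun x acc => (Hs X4 P t <= Hs X4 P x)%R /\ acc) True Ax4L -> F 4 P t.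
  move=> vP tA H; apply/(ch4 P t vP tA); apply: forall_list; by rewrite Ax4E.
do !split; apply: mem4 => //; rewrite /Ax4L /= !hs4 !big_cons !big_nil /=;
  do !split; lra.
Qed.

Lemma contra : False.
Proof.
have [F1 [F2a [F2b [F3a [F3b [F4a F4b]]]]]] := C4facts.
have [X5 [ch5 m5 r5]] := charX (n:=5) isT.
have hs5 P w : Hs X5 P w = (\sum_(A <- P) X5 (isort (pos w A)))%R by apply: HsI.
have ax4 t : t \in Ax4L -> t \in Ax 4 by rewrite Ax4E.
pose P1' : seq (seq nat) := [:: [:: 0; 1; 3; 4]; [:: 0; 2; 3; 4]; [:: 1; 2; 3; 4]].
have [G1 _] := lift_both ch5 (P':=P1') (x:=3) (t:=[:: 0; 1; 3; 2]) (a1:=[:: 0; 1; 3; 4; 2])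
   (a2:=[:: 0; 1; 4; 3; 2]) isT isT isT isT ltac:(by rewrite Ax4E) F1 ltac:(by vm_compute)
   ltac:(by rewrite !hs5 !big_cons !big_nil).
have I1 := viol_lt ch5 (P':=P1') (x:=3) (w:=[:: 0; 4; 1; 3; 2]) isT isT isT ltac:(by vm_compute)
   ltac:(by vm_compute) G1 ltac:(by vm_compute).
pose P2' : seq (seq nat) := [:: [:: 0; 1; 2; 4]; [:: 0; 1; 3; 4]; [:: 0; 2; 3; 4]; [:: 1; 2; 3]].
have [G2a _] := lift_both ch5 (P':=P2') (x:=0) (t:=[:: 1; 2; 0; 3]) (a1:=[:: 1; 2; 0; 4; 3])
   (a2:=[:: 1; 2; 4; 0; 3]) isT isT isT isT ltac:(by rewrite Ax4E) F2a ltac:(by vm_compute)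
   ltac:(by rewrite !hs5 !big_cons !big_nil).
have [G2b _] := lift_both ch5 (P':=P2') (x:=0) (t:=[:: 0; 1; 2; 3]) (a1:=[:: 0; 4; 1; 2; 3])
   (a2:=[:: 4; 0; 1; 2; 3]) isT isT isT isT ltac:(by rewrite Ax4E) F2b ltac:(by vm_compute)
   ltac:(by rewrite !hs5 !big_cons !big_nil).
have I2 := both_eq ch5 (P':=P2') (a:=[:: 1; 2; 0; 4; 3]) (b:=[:: 0; 4; 1; 2; 3]) isT ltac:(by vm_compute) ltac:(by vm_compute) G2a G2b.
pose P3' : seq (seq nat) := [:: [:: 1; 2; 4]; [:: 1; 3; 4]; [:: 2; 3]].
have [G3a _] := lift_both ch5 (P':=P3') (x:=1) (t:=[:: 0; 3; 2; 1]) (a1:=[:: 0; 3; 2; 1; 4])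
   (a2:=[:: 0; 3; 2; 4; 1]) isT isT isT isT ltac:(by rewrite Ax4E) F3a ltac:(by vm_compute)
   ltac:(by rewrite !hs5 !big_cons !big_nil).
have [G3b _] := lift_both ch5 (P':=P3') (x:=1) (t:=[:: 0; 1; 2; 3]) (a1:=[:: 0; 1; 4; 2; 3])
   (a2:=[:: 0; 4; 1; 2; 3]) isT isT isT isT ltac:(by rewrite Ax4E) F3b ltac:(by vm_compute)
   ltac:(by rewrite !hs5 !big_cons !big_nil).
have I3 := both_eq ch5 (P':=P3') (a:=[:: 0; 3; 2; 1; 4]) (b:=[:: 0; 1; 4; 2; 3]) isT ltac:(by vm_compute) ltac:(by vm_compute) G3a G3b.
pose P4' : seq (seq nat) := [:: [:: 1; 2; 4]; [:: 1; 3; 4]; [:: 2; 3]; [:: 0; 1; 3; 4]; [:: 0; 2; 3]; [:: 1; 2; 3; 4]].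
have [G4a _] := lift_both ch5 (P':=P4') (x:=1) (t:=[:: 1; 3; 2; 0]) (a1:=[:: 1; 4; 3; 2; 0])
   (a2:=[:: 4; 1; 3; 2; 0]) isT isT isT isT ltac:(by rewrite Ax4E) F4a ltac:(by vm_compute)
   ltac:(by rewrite !hs5 !big_cons !big_nil).
have [G4b _] := lift_both ch5 (P':=P4') (x:=1) (t:=[:: 0; 1; 3; 2]) (a1:=[:: 0; 1; 4; 3; 2])
   (a2:=[:: 0; 4; 1; 3; 2]) isT isT isT isT ltac:(by rewrite Ax4E) F4b ltac:(by vm_compute)
   ltac:(by rewrite !hs5 !big_cons !big_nil).
have I4 := both_eq ch5 (P':=P4') (a:=[:: 1; 4; 3; 2; 0]) (b:=[:: 0; 1; 4; 3; 2]) isT ltac:(by vm_compute) ltac:(by vm_compute) G4a G4b.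
move: I1 I2 I3 I4; rewrite !hs5 !big_cons !big_nil /= => I1 I2 I3 I4.
have e1234 : X5 [:: 1; 2; 3; 4] = X5 [:: 0; 1; 2; 3] := Xint (n:=5) isT ch5 (m:=1) (k:=4) isT isT.
have e234 : X5 [:: 2; 3; 4] = X5 [:: 0; 1; 2] := Xint (n:=5) isT ch5 (m:=2) (k:=3) isT isT.
have e123 : X5 [:: 1; 2; 3] = X5 [:: 0; 1; 2] := Xint (n:=5) isT ch5 (m:=1) (k:=3) isT isT.
have e34 : X5 [:: 3; 4] = X5 [:: 0; 1] := Xint (n:=5) isT ch5 (m:=3) (k:=2) isT isT.
have e23 : X5 [:: 2; 3] = X5 [:: 0; 1] := Xint (n:=5) isT ch5 (m:=2) (k:=2) isT isT.
have e12 : X5 [:: 1; 2] = X5 [:: 0; 1] := Xint (n:=5) isT ch5 (m:=1) (k:=2) isT isT.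
have r0234 : X5 [:: 0; 2; 3; 4] = X5 [:: 0; 1; 2; 4] :=
  revfact m5 r5 (S:=[:: 0; 1; 2; 4]) (S':=[:: 0; 2; 3; 4]) isT isT.
have r134 : X5 [:: 1; 3; 4] = X5 [:: 0; 1; 3] :=
  revfact m5 r5 (S:=[:: 0; 1; 3]) (S':=[:: 1; 3; 4]) isT isT.
have r124 : X5 [:: 1; 2; 4] = X5 [:: 0; 2; 3] :=
  revfact m5 r5 (S:=[:: 0; 2; 3]) (S':=[:: 1; 2; 4]) isT isT.
have r034 : X5 [:: 0; 3; 4] = X5 [:: 0; 1; 4] :=
  revfact m5 r5 (S:=[:: 0; 1; 4]) (S':=[:: 0; 3; 4]) isT isT.
lra.
Qed.

End Main.

Theorem mainTheorem11 (U : choiceType) (R : realType) :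
  infinite_universe U ->
  ~ (exists f : rule_type U,
       [/\ axis_rule f, scoring_rule R f, neutral f,
           consistent_with_linearity f &
           resistant_to_cloning f /\ clone_proximity f]).
Proof.
move=> Hinf [f [Hax Hsc Hneu Hlin [Hres Hprox]]].
have [u0 _] := Hinf fset0.
have [u1 h1] := Hinf [fset u0].
have [u2 h2] := Hinf [fset u0; u1].
have [u3 h3] := Hinf [fset u0; u1; u2].
have [u4 h4] := Hinf [fset u0; u1; u2; u3].
pose s := [:: u0; u1; u2; u3; u4].
have us : uniq s.
  move: h1 h2 h3 h4; rewrite !inE.
  move=> h1 /norP [h20 h21] /norP [/norP [h30 h31] h32] /norP[/norP[/norP[h40 h41] h42] h43].
  rewrite eq_sym in h1; rewrite eq_sym in h20; rewrite eq_sym in h21.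
  rewrite eq_sym in h30; rewrite eq_sym in h31; rewrite eq_sym in h32.
  rewrite eq_sym in h40; rewrite eq_sym in h41; rewrite eq_sym in h42; rewrite eq_sym in h43.
  rewrite /s /= !inE !negb_or.
  by rewrite h1 h20 h21 h30 h31 h32 h40 h41 h42 h43.
pose u i := nth u0 s i.
have u_inj : forall i j, (i < 5)%N -> (j < 5)%N -> u i = u j -> i = j.
  move=> i j Hi Hj /eqP; rewrite /u nth_uniq //; by move/eqP.
exact: (contra Hax Hsc Hneu Hlin Hres Hprox u_inj).
Qed.
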